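(* Let $H_1,\dots,H_n$ be null hypotheses indexed by $\mathcal V=\{1,\dots,n\}$ with $p$-values $p_1,\dots,p_n$ that are marginally uniform on $[0,1]$ under the null; let $\bar{\mathcal S}=\{v:H_v\text{ true}\}$. Let $\mathcal G$ be a directed acyclic graph on $\mathcal V$ such that if $H_v$ is false then $H_w$ is false for every ancestor $w$ of $v$, and let $\mathcal C_v$ be $v$ together with its descendants. Let $Z_v=\Phi^{-1}(p_v)$, where $\Phi$ is the standard normal CDF, and assume $Z_{\bar{\mathcal S}}\sim\mathcal N(0,R)$ for some correlation matrix $R$. For weights $\pi_{vw}\ge0$ with $\sum_{w\in\mathcal C_v}\pi_{vw}=1$, define \[\tilde p_v=\begin{cases}1 & \text{if }\sum_{w\in\mathcal C_v}\pi_{vw}Z_w\ge0,\\ \Phi\big(\sum_{w\in\mathcal C_v}\pi_{vw}Z_w\big)&\text{otherwise.}\end{cases}\] Then $\Pr(\tilde p_v\le\alpha)\le\alpha$ for all $\alpha\in[0,1]$ and all $v\in\bar{\mathcal S}$. *)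

(* Defs.v *)
From HB Require Import structures.
From mathcomp Require Import all_boot all_order all_algebra.
From mathcomp Require Import all_classical all_reals all_analysis.
Set Implicit Arguments. Unset Strict Implicit. Unset Printing Implicit Defensive.
Import Order.TTheory GRing.Theory Num.Theory.
Local Open Scope classical_set_scope.
Local Open Scope ring_scope.

Section Defs.
Context {R : realType}.

Definition Phi (x : R) : R := fine (normal_prob 0 1 `]-oo, x]).

(* quantile function Phi^{-1}(y) = inf {x | y <= Phi x}; this is the inverse
   of Phi on (0,1); at y = 0 or 1 it takes the (irrelevant, probability-zero)
   conventional value given by inf on unbounded/empty sets. *)
Definition Phiinv (y : R) : R := inf [set x : R | y <= Phi x].

Definition is_centered_normal {d} {T : measurableType d}
  (P : probability T R) (Y : T -> R) (s2 : R) : Prop :=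
  0 <= s2 /\
  forall A : set R, measurable A ->
    P (Y @^-1` A) =
    (if s2 == 0 then \d_(0:R) A else normal_prob 0 (Num.sqrt s2) A).

End Defs.

Definition desc_closure {n} (e : rel 'I_n) (v : 'I_n) : {set 'I_n} :=
  [set w | connect e v w].

Definition is_dag {n} (e : rel 'I_n) : Prop :=
  (forall v, ~~ e v v) /\
  (forall v w, connect e v w -> connect e w v -> v = w).

(* Main.v *)
Require Import Defs.
From HB Require Import structures.
From mathcomp Require Import all_boot all_order all_algebra.
From mathcomp Require Import all_classical all_reals all_analysis.
From mathcomp Require Import measurable_realfun.
From mathcomp Require Import ring lra.
Import Order.TTheory GRing.Theory Num.Theory.
Local Open Scope classical_set_scope.
Local Open Scope ring_scope.

Section K.
Context {R : realType}.

Lemma PhiE (x : R) : normal_prob 0 1 `]-oo, x] = (Phi x)%:E.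
Proof.
rewrite /Phi fineK // ge0_fin_numE ?measure_ge0 //.
by apply: (le_lt_trans (probability_le1 _ _)) => //; rewrite ltry.
Qed.

Lemma Phi_le1 (x : R) : Phi x <= 1.
Proof. by rewrite -lee_fin -PhiE probability_le1. Qed.

Lemma downclosed_meas (A : set R) :
  (forall x y, A x -> y <= x -> A y) -> measurable A.
Proof.
move=> dA; apply: is_interval_measurable => x y Ax Ay z /andP[_ zy].
exact: dA Ay zy.
Qed.

Lemma key (alpha : R) (A : set R) : 0 <= alpha ->
  (forall x y, A x -> y <= x -> A y) ->
  (forall x, A x -> x < 0 /\ Phi x <= alpha) ->
  (normal_prob 0 1 A <= alpha%:E)%E.
Proof.
move=> a0 dA hA.
have mA := @downclosed_meas A dA.
have [->|/set0P[x0 Ax0]] := eqVneq A set0; first by rewrite measure0 lee_fin.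
have hs : has_sup A.
  split; first by exists x0.
  by exists 0 => x /hA [/ltW]. 
set q := sup A.
have ubq := sup_upper_bound hs.
have [Aq|nAq] := pselect (A q).
  apply: (le_trans (y := normal_prob 0 1 `]-oo, q])).
    apply: le_measure => //; rewrite ?inE //.
  by rewrite PhiE lee_fin; exact: (hA _ Aq).2.
pose F (k : nat) := [set` `]-oo, q - k.+1%:R^-1]].
have FA k : F k `<=` A.
  move=> x; rewrite /F /= in_itv /= => xl.
  have [a Aa lt] := @sup_adherent _ A (k.+1%:R^-1) (ltac:(by rewrite invr_gt0 ltr0Sn)) hs.
  exact: dA _ _ Aa (le_trans xl (ltW lt)).
have AU : A `<=` \bigcup_k F k.
  move=> x Ax; have xq : x < q.
    by rewrite lt_neqAle ubq // andbT; apply/eqP => xq; apply: nAq; rewrite -xq.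
  have [k hk] := ltr_add_invr xq.
  by exists k => //; rewrite /F /= in_itv /= lerBrDr ltW.
have mU : measurable (\bigcup_k F k) by apply: bigcupT_measurable => k; exact: measurable_itv.
apply: (le_trans (y := normal_prob 0 1 (\bigcup_k F k))).
  by apply: le_measure => //; rewrite inE.
have cv := @nondecreasing_cvg_mu _ _ _ (normal_prob (0:R) 1) F (fun k => measurable_itv _) mU.
apply: (lee_cvg_to (cv _) (cvg_cst _)).
  move=> i j ij; apply/subsetPset => x; rewrite /F /= !in_itv /= => xi.
  apply: (le_trans xi); rewrite lerB // lef_pV2 ?posrE // ler_nat ltnS //.
apply: nearW => k /=.
by rewrite /F PhiE lee_fin; case: (hA _ (FA k _ (lexx _))) => // _ ; rewrite in_itv /=.
Qed.

Lemma Phi_le (x y : R) : x <= y -> Phi x <= Phi y.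
Proof.
move=> xy; rewrite -lee_fin -!PhiE; apply: le_measure; rewrite ?inE //.
by move=> z; rewrite /= !in_itv /= => zx; exact: le_trans zx xy.
Qed.

Lemma sum_cond n (S C : {set 'I_n}) (f : 'I_n -> R) : {subset C <= S} ->
  \sum_(i in S) (if i \in C then f i else 0) = \sum_(i in C) f i.
Proof.
move=> CS; rewrite -big_mkcondr /=; apply: eq_bigl => i.
by apply/andP/idP => [[]//|iC]; split => //; exact: CS.
Qed.

Lemma sum_delta n (S : {set 'I_n}) (i : 'I_n) (G : 'I_n -> R) : i \in S ->
  \sum_(k in S) (k == i)%:R * G k = G i.
Proof.
move=> iS; rewrite (bigD1 i) //= eqxx mul1r big1 ?addr0 //.
by move=> k /andP[_ /negbTE ->]; rewrite mul0r.
Qed.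

Lemma R_le1 n (Sbar : {set 'I_n}) (Rm : 'M[R]_n)
  (hRsym : forall i j, i \in Sbar -> j \in Sbar -> Rm i j = Rm j i)
  (hRdiag : forall i, i \in Sbar -> Rm i i = 1)
  (hRpsd : forall c : 'I_n -> R,
     0 <= \sum_(i in Sbar) \sum_(j in Sbar) c i * c j * Rm i j) :
  forall i j, i \in Sbar -> j \in Sbar -> Rm i j <= 1.
Proof.
move=> i j iS jS; have [<-|ij] := eqVneq i j; first by rewrite hRdiag.
pose d (k : 'I_n) : R := (k == i)%:R - (k == j)%:R.
have := hRpsd d.
have inner k : \sum_(l in Sbar) d k * d l * Rm k l = d k * (Rm k i - Rm k j).
  under eq_bigr do rewrite -mulrA.
  rewrite -mulr_sumr; congr (_ * _).
  under eq_bigr do rewrite /d mulrBl.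
  by rewrite sumrB !sum_delta.
under eq_bigr do rewrite inner.
under eq_bigr do rewrite /d mulrBl.
rewrite sumrB !sum_delta // !hRdiag // (hRsym j i) //.
lra.
Qed.
End K.
Arguments sum_cond {R n S C f}.
Arguments R_le1 {R n Sbar Rm}.
Arguments downclosed_meas {R A}.
Arguments Phi_le {R x y}.

Theorem lemma2 (R : realType) (d : measure_display) (T : measurableType d)
  (P : probability T R) (n : nat)
  (p : 'I_n -> T -> R)                 (* p-values *)
  (Sbar : {set 'I_n})                  (* true null hypotheses *)
  (e : rel 'I_n)                       (* edges of the DAG G *)
  (Rm : 'M[R]_n)                       (* correlation matrix (block on Sbar) *)
  (pi : 'I_n -> 'I_n -> R)             (* weights pi_{vw} *)
  (hp_meas : forall v, measurable_fun setT (p v))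
  (hp01 : forall v t, 0 <= p v t <= 1)
  (hunif : forall v, v \in Sbar -> forall a : R, 0 <= a <= 1 ->
     P [set t | p v t <= a] = a%:E)
  (hdag : is_dag e)
  (hlog : forall v w, v \notin Sbar -> connect e w v -> w \notin Sbar)
  (hRsym : forall i j, i \in Sbar -> j \in Sbar -> Rm i j = Rm j i)
  (hRdiag : forall i, i \in Sbar -> Rm i i = 1)
  (hRpsd : forall c : 'I_n -> R,
     0 <= \sum_(i in Sbar) \sum_(j in Sbar) c i * c j * Rm i j)
  (hgauss : forall c : 'I_n -> R,
     is_centered_normal P
       (fun t => \sum_(i in Sbar) c i * Phiinv (p i t))
       (\sum_(i in Sbar) \sum_(j in Sbar) c i * c j * Rm i j))
  (hpi_ge0 : forall v w, 0 <= pi v w)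
  (hpi_sum : forall v, \sum_(w in desc_closure e v) pi v w = 1) :
  forall (v : 'I_n) (alpha : R), v \in Sbar -> 0 <= alpha <= 1 ->
    (P [set t | ((let s := \sum_(w in desc_closure e v) pi v w * Phiinv (p w t) in
                if 0 <= s then 1 else Phi s) <= alpha)%R] <= alpha%:E)%E.
Proof.
move=> v alpha vS /andP[a0 a1].
set C := desc_closure e v.
have CS : {subset C <= Sbar}.
  move=> w; rewrite inE => vw; apply/negPn/negP => wS.
  by move: (hlog _ _ wS vw); rewrite vS.
pose c i := if i \in C then pi v i else 0.
have c0 i : 0 <= c i by rewrite /c; case: ifP.
have sE t : \sum_(w in C) pi v w * Phiinv (p w t) =
    \sum_(i in Sbar) c i * Phiinv (p i t).
  rewrite -(sum_cond CS); apply: eq_bigr => i _; rewrite /c.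
  by case: ifP => _; rewrite ?mul0r.
pose X t := \sum_(i in Sbar) c i * Phiinv (p i t).
pose s2 := \sum_(i in Sbar) \sum_(j in Sbar) c i * c j * Rm i j.
have s2ge0 : 0 <= s2 := hRpsd c.
have csum : \sum_(i in Sbar) c i = 1 by rewrite -(hpi_sum v) -(sum_cond CS).
have s2le1 : s2 <= 1.
  rewrite -(mulr1 1) -{1}csum -{1}csum big_distrlr /=.
  apply: ler_sum => i iS; apply: ler_sum => j jS.
  by rewrite ler_piMr ?mulr_ge0 // (R_le1 hRsym hRdiag hRpsd).
have [->|an1] := eqVneq alpha 1.
  rewrite (_ : [set t | _] = setT) ?probability_setT //.
  apply/seteqP; split => t //= _; case: ifP => _ //; exact: Phi_le1.
have alt1 : alpha < 1 by rewrite lt_neqAle an1.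
pose A := [set x : R | x < 0 /\ Phi x <= alpha].
have dA : forall x y, A x -> y <= x -> A y.
  move=> x y [x0 Px] yx; split; first exact: le_lt_trans yx x0.
  exact: le_trans (Phi_le yx) Px.
have setE : [set t | (let s := \sum_(w in desc_closure e v) pi v w * Phiinv (p w t) in
                if 0 <= s then 1 else Phi s) <= alpha] = X @^-1` A.
  apply/seteqP; split => t /=; rewrite sE -/(X t); case: ifPn => h.
  - by rewrite leNgt alt1.
  - by move=> Pa; split => //; rewrite ltNge.
  - by case=> x0; rewrite leNgt x0 in h.
  - by case.
rewrite setE.
have [s20|s2n0] := eqVneq s2 0.
  have [_ hg] := hgauss c.
  rewrite hg; last exact: downclosed_meas dA.
  rewrite -/s2 s20 eqxx diracE.
  case: (boolP ((0:R) \in A)) => [/set_mem [] |_]; first by rewrite ltxx.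
  by rewrite lee_fin.
have s2gt0 : 0 < s2 by rewrite lt_neqAle eq_sym s2n0.
pose sg := Num.sqrt s2.
have sg0 : 0 < sg by rewrite sqrtr_gt0.
have sg1 : sg <= 1 by rewrite -sqrtr1 ler_sqrt.
pose c' i := c i / sg.
have var1 : \sum_(i in Sbar) \sum_(j in Sbar) c' i * c' j * Rm i j = 1.
  have -> : \sum_(i in Sbar) \sum_(j in Sbar) c' i * c' j * Rm i j = s2 / sg ^+ 2.
    rewrite /s2 mulr_suml; apply: eq_bigr => i _.
    rewrite mulr_suml; apply: eq_bigr => j _.
    rewrite /c'; field; exact: lt0r_neq0.
  by rewrite sqr_sqrtr ?divff.
have [_ hg] := hgauss c'.
pose B := [set y | A (sg * y)].
have XE : X @^-1` A = (fun t => \sum_(i in Sbar) c' i * Phiinv (p i t)) @^-1` B.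
  have Xsg t : X t = sg * \sum_(i in Sbar) c' i * Phiinv (p i t).
    rewrite mulr_sumr; apply: eq_bigr => i _; rewrite /c'; field; exact: lt0r_neq0.
  by apply/seteqP; split => t; rewrite /B /= Xsg.
have dB : forall x y, B x -> y <= x -> B y.
  by move=> x y Bx yx; apply: dA Bx _; rewrite ler_pM2l.
rewrite XE hg; last exact: downclosed_meas dB.
rewrite var1 oner_eq0 sqrtr1.
apply: (le_trans (y := normal_prob 0 1 A)).
  apply: le_measure; rewrite ?inE; [exact: downclosed_meas dB|exact: downclosed_meas dA|].
  move=> y By; have [hy _] := By; apply: (dA _ _ By).
  have y0 : y < 0 by rewrite -(pmulr_rlt0 _ sg0).
  nra.
apply: key => // x [].
Qed.
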